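(* Let $n\ge 11$ and let $G$ be a connected bidegreed graph of order $n$ with maximum degree $n-1$, and let $k=|M(G)|$. Then $$cM_2(G)\le k(n-k)\left((n-1)^2-k^2\right),$$ with equality if and only if $G$ is isomorphic to $K_k+\overline{K}_{n-k}$. Also, the inequality $$cM_2(G)\le \epsilon\, n^2(1-\epsilon)\left((n-1)^2-\epsilon^2n^2\right)$$ holds for some real $\epsilon$ lying between $372/1000$ and $392/1000$.
   Context: All graphs are finite and simple. For a graph $G$ and a vertex $u$, $d_u(G)$ denotes the degree of $u$ in $G$. The complementary second Zagreb index of $G$ is $cM_2(G)=\sum_{uv\in E(G)}\left|(d_u(G))^2-(d_v(G))^2\right|$. $M(G)$ denotes the set of vertices of $G$ having the maximum degree of $G$. A graph is bidegreed if the set of distinct vertex degrees has exactly two elements. $K_m$ is the complete graph on $m$ vertices, $\overline{H}$ is the complement of $H$, and $H_1+H_2$ (the join) is the graph on the disjoint union $V(H_1)\cup V(H_2)$ with edge set $E(H_1)\cup E(H_2)\cup\{h_1h_2: h_1\in V(H_1),h_2\in V(H_2)\}$. *)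

(* Defs.v *)
From HB Require Import structures.
From mathcomp Require Import all_boot all_order all_algebra.
From mathcomp Require Import reals.
Set Implicit Arguments. Unset Strict Implicit. Unset Printing Implicit Defensive.
Import Order.TTheory GRing.Theory Num.Theory.

(* A simple graph on a finite type T is a symmetric irreflexive relation e. *)
Section Graphs.
Variable T : finType.
Variable e : rel T.

Definition deg (u : T) : nat := #|[set v | e u v]|.
Definition maxdeg : nat := \max_(u : T) deg u.
Definition Mset : {set T} := [set u | deg u == maxdeg].
Definition bidegreed : Prop := size (undup [seq deg u | u <- enum T]) = 2.
Definition connected : Prop := forall u v : T, connect e u v.
(* cM_2(G) = sum over (unordered) edges uv of |d_u^2 - d_v^2|;
   computed as half the sum over ordered adjacent pairs (u,v). *)
Definition absdiff (a b : nat) : nat := (a - b) + (b - a).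
Definition cM2 : nat :=
  (\sum_(u : T) \sum_(v : T | e u v) absdiff (deg u ^ 2) (deg v ^ 2)) %/ 2.
End Graphs.

Definition completeG (m : nat) : rel 'I_m := fun i j => i != j.
Definition emptyG (m : nat) : rel 'I_m := fun _ _ => false.

Definition join (T1 T2 : finType) (e1 : rel T1) (e2 : rel T2) : rel (T1 + T2)%type :=
  fun x y => match x, y with
             | inl a, inl b => e1 a b
             | inr a, inr b => e2 a b
             | _, _ => true
             end.

Definition isomorphic (T1 T2 : finType) (e1 : rel T1) (e2 : rel T2) : Prop :=
  exists f : T1 -> T2, bijective f /\ forall x y, e1 x y = e2 (f x) (f y).

(* Main.v *)
Require Import Defs.
From HB Require Import structures.
From mathcomp Require Import all_boot all_order all_algebra.
From mathcomp Require Import reals.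
From mathcomp Require Import ring lra zify.
Import Order.TTheory GRing.Theory Num.Theory.

Local Open Scope ring_scope.

Lemma L1 (R : realFieldType) (n x : R) : 11 <= n -> 0 <= x -> x <= 372/1000 * n ->
  x * (n - x) * ((n-1)^+2 - x^+2) <= (372/1000 * n) * (n - 372/1000 * n) * ((n-1)^+2 - (372/1000 * n)^+2).
Proof.
move=> hn hx hxa.
set a := 372/1000 * n.
have ha : a = 372/1000 * n by [].
rewrite -subr_ge0.
have -> : a * (n - a) * ((n - 1) ^+ 2 - a ^+ 2) - x * (n - x) * ((n - 1) ^+ 2 - x ^+ 2) =
  (a - x) * (((n-2*a)*((n-1)^+2-a^+2) - 2*a^+2*(n-a)) + (a - x) * ((n-1)^+2 + n*(x+2*a) - x^+2 - 2*a*x - 3*a^+2)) by ring.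
apply: mulr_ge0; first lra.
apply: addr_ge0.
  rewrite ha; nra.
apply: mulr_ge0; first lra.
have h1 : x * (n - x - 2 * a) >= - (116/1000 * n) * a by nra.
have h2 : 0 <= (n-1)^+2 by nra.
nra.
Qed.

Lemma L2 (R : realFieldType) (n x : R) : 11 <= n -> 392/1000 * n <= x -> x <= n - 2 ->
  x * (n - x) * ((n-1)^+2 - x^+2) <= (392/1000 * n) * (n - 392/1000 * n) * ((n-1)^+2 - (392/1000 * n)^+2).
Proof.
move=> hn hxb hx.
set b := 392/1000 * n.
have hb : b = 392/1000 * n by [].
rewrite -subr_ge0.
have -> : b * (n - b) * ((n - 1) ^+ 2 - b ^+ 2) - x * (n - x) * ((n - 1) ^+ 2 - x ^+ 2) =
  (x - b) * ((b + x - n) * ((n-1)^+2 - (b+x)^+2) + b * x * (2 * (b+x) - n)) by ring.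
apply: mulr_ge0; first lra.
have [hp|hp] := lerP n (b + x).
  set v := b + x - n.
  have hv : 0 <= v by rewrite /v; lra.
  have hv1 : v <= b - 1 by rewrite /v; lra.
  have -> : (b + x - n) * ((n - 1) ^+ 2 - (b + x) ^+ 2) = - (v * (v + 1) * (2*n + v - 1)).
    rewrite /v; ring.
  have -> : b * x * (2 * (b + x) - n) = b * (n + v - b) * (n + 2 * v) by rewrite /v; ring.
  have h1 : v * (v + 1) <= v * b by nra.
  have h2 : v * (v + 1) * (2*n + v - 1) <= v * b * (2*n + v - 1) by apply: ler_wpM2r; nra.
  have h3 : v * (2*n + v - 1) <= (n + v - b) * (n + 2 * v) by nra.
  have h4 : 0 <= b by lra.
  nra.
have [hq|hq] := lerP (n - 1) (b + x).
  have e1 : b + x - n <= 0 by lra.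
  have e2 : (n - 1) ^+ 2 - (b + x) ^+ 2 <= 0.
    rewrite subr_le0 ler_sqr ?nnegrE; lra.
  have h1 : 0 <= (b + x - n) * ((n - 1) ^+ 2 - (b + x) ^+ 2) by apply: mulr_le0.
  have h2 : 0 <= b * x * (2 * (b + x) - n) by apply: mulr_ge0; [apply: mulr_ge0|]; lra.
  lra.
set u := n - (b + x).
have hu : 1 <= u by rewrite /u; lra.
have hu2 : u <= 216/1000 * n by rewrite /u; lra.
have -> : (b + x - n) * ((n - 1) ^+ 2 - (b + x) ^+ 2) = - (u * (u - 1) * (2*n - 1 - u)).
  rewrite /u; ring.
have -> : b * x * (2 * (b + x) - n) = b * (n - u - b) * (n - 2 * u) by rewrite /u; ring.
have h1 : u * (u - 1) * (2*n - 1 - u) <= u * u * (2 * n - u) by nra.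
set w := 216/1000 * n.
have hw : u <= w by [].
have hn0 : 0 <= n by lra.
have g1 : u * u * (2 * n - u) <= w * w * (2 * n - w).
  rewrite -subr_ge0.
  have -> : w * w * (2 * n - w) - u * u * (2 * n - u) = (w - u) * (2 * n * (w + u) - (w*w + w*u + u*u)) by ring.
  apply: mulr_ge0; first lra.
  rewrite /w in hw *; nra.
have g2 : w * w * (2 * n - w) <= b * (n - w - b) * (n - 2 * w).
  rewrite /w hb; nra.
have g3 : b * (n - w - b) * (n - 2 * w) <= b * (n - u - b) * (n - 2 * u).
  have hb0 : 0 <= b by lra.
  have k : (n - w - b) * (n - 2 * w) <= (n - u - b) * (n - 2 * u).
    apply: ler_pM; rewrite /w in hw *; lra.
  have := ler_wpM2l hb0 k.
  by rewrite !mulrA.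
lra.
Qed.
Local Close Scope ring_scope.

Section Comb.
Variables (T : finType) (e : rel T).
Hypotheses (esym : symmetric e) (eirr : irreflexive e).

Lemma nbr_sub u : [set v | e u v] \subset [set~ u].
Proof. apply/subsetP => v; rewrite !inE => h; apply/eqP => vu; by rewrite vu eirr in h. Qed.

Lemma deg_le u : (deg e u <= #|T|.-1)%N.
Proof. rewrite /deg -(cardsC1 u); exact: subset_leq_card (nbr_sub u). Qed.

Lemma deg_full u : deg e u = #|T|.-1 -> forall v, v != u -> e u v.
Proof.
move=> hd v hv.
have /eqP E : [set v | e u v] == [set~ u].
  rewrite eqEcard nbr_sub /= cardsC1 -hd /deg. exact: leqnn.
have : v \in [set~ u] by rewrite in_setC1.
by rewrite -E inE.
Qed.

Variable n : nat.
Hypotheses (hT : #|T| = n) (hn : (11 <= n)%N) (hmax : maxdeg e = n.-1) (hbi : bidegreed e).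

Local Notation M := (Mset e).

Lemma inM u : (u \in M) = (deg e u == n.-1).
Proof. by rewrite /Mset inE hmax. Qed.

Lemma M_adj u v : u \in M -> v != u -> e u v.
Proof. rewrite inM -hT => /eqP h; exact: deg_full. Qed.

Lemma exists_M : exists u, u \in M.
Proof.
have h0 : (0 < #|T|)%N by rewrite hT; lia.
have [u hu] := bigop.eq_bigmax (deg e) h0.
by exists u; rewrite inM -hmax /maxdeg hu.
Qed.

Lemma bideg_struct : exists d, [/\ d != n.-1, (forall u, u \notin M -> deg e u = d) & exists w, w \notin M].
Proof.
have [u0 hu0] := exists_M.
move: hbi; rewrite /bidegreed.
have mem_s : forall u, deg e u \in undup [seq deg e u | u <- enum T].
  by move=> u; rewrite mem_undup; apply/mapP; exists u; rewrite ?mem_enum.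
have hs_in : forall x, x \in undup [seq deg e u | u <- enum T] -> exists u, deg e u = x.
  by move=> x; rewrite mem_undup => /mapP [u _ ->]; exists u.
have us := undup_uniq [seq deg e u | u <- enum T].
move: mem_s hs_in us.
case: (undup _) => [|a [|b [|]]] //= mem_s hs_in us _.
have hn1 : n.-1 \in [:: a; b] by move: hu0; rewrite inM => /eqP <-; exact: mem_s.
have [d [hd1 hd2 hd3]] : exists d, [/\ d \in [:: a; b], d != n.-1 & forall x, x \in [:: a; b] -> x = n.-1 \/ x = d].
  move: us; rewrite !inE andbT => hab.
  case: (eqVneq a n.-1) => ha.
    exists b; split; rewrite ?inE ?eqxx ?orbT //; first by rewrite -ha eq_sym.
    by move=> x; rewrite !inE => /orP [/eqP ->|/eqP ->]; [left|right].
  move: hn1; rewrite !inE eq_sym (negbTE ha) /= => /eqP hb.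
  exists a; split; rewrite ?inE ?eqxx //.
  by move=> x; rewrite !inE => /orP [/eqP ->|/eqP ->]; [right|left].
exists d; split => //.
  move=> u; rewrite inM => hu.
  by case: (hd3 _ (mem_s u)) => // h; rewrite h eqxx in hu.
have [w hw] := hs_in d hd1.
by exists w; rewrite inM hw.
Qed.


Variable d : nat.
Hypotheses (hdn : d != n.-1) (hdeg : forall u, u \notin M -> deg e u = d).

Lemma degE x : deg e x = if x \in M then n.-1 else d.
Proof. by case: ifP => h; [move: h; rewrite inM => /eqP | rewrite hdeg // h]. Qed.

Variable w0 : T.
Hypothesis hw0 : w0 \notin M.

Lemma k_le_d : (#|M| <= d)%N.
Proof.
rewrite -(hdeg _ hw0) /deg; apply: subset_leq_card; apply/subsetP => v hv.
rewrite inE esym; apply: M_adj => //; apply/eqP => vw; move: hw0; by rewrite vw hv.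
Qed.

Lemma d_lt : (d < n.-1)%N.
Proof.
have := deg_le w0; rewrite hdeg // hT => h.
by rewrite ltn_neqAle hdn h.
Qed.

Lemma cardCM : #|~: M| = (n - #|M|)%N.
Proof. by rewrite -hT -(cardsC M) addKn. Qed.

Lemma cM2_formula : cM2 e = (#|M| * (n - #|M|) * (n.-1 ^ 2 - d ^ 2))%N.
Proof.
set k := #|M|.
set D := (n.-1 ^ 2 - d ^ 2)%N.
have hsq : (d ^ 2 <= n.-1 ^ 2)%N by rewrite leq_sqr ltnW // d_lt.
have hab : forall u v, absdiff (deg e u ^ 2) (deg e v ^ 2) = if (u \in M) != (v \in M) then D else 0%N.
  move=> u v; rewrite !degE /absdiff /D.
  case: (u \in M); case: (v \in M) => /=; rewrite ?subnn //; lia.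
have inner : forall u, (\sum_(v | e u v) absdiff (deg e u ^ 2) (deg e v ^ 2) = (if u \in M then n - k else k) * D)%N.
  move=> u; under eq_bigr do rewrite hab.
  rewrite -big_mkcondr sum_nat_const; congr (_ * _)%N.
  case: ifP => hu.
    rewrite -cardCM; apply: eq_card => v; rewrite in_setC.
    rewrite -[v \in _]/(e u v && (true != (v \in M))).
    case hv: (v \in M) => //=; rewrite ?andbT ?andbF //; apply: M_adj => //; apply/eqP => vu; by rewrite vu hu in hv.
  apply: eq_card => v.
  rewrite -[v \in _]/(e u v && (false != (v \in M))).
  case hv: (v \in M); rewrite ?andbF ?andbT //=.
  rewrite esym; apply: M_adj => //; apply/eqP => vu; move: hu; by rewrite vu hv.
rewrite /cM2; under eq_bigr do rewrite inner.
rewrite (bigID (fun u => u \in M)) /=.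
rewrite (eq_bigr (fun _ => (n-k)*D)%N); last by move=> u ->.
rewrite [X in (_ + X)%N](eq_bigr (fun _ => k*D)%N); last by move=> u /negbTE ->.
rewrite !sum_nat_const.
have -> : #|(fun i : T => i \notin M)| = (n - k)%N.
  by rewrite -cardCM; apply: eq_card => u; rewrite in_setC.
rewrite -/k.
have -> : (k * ((n - k) * D) + (n - k) * (k * D) = 2 * (k * (n - k) * D))%N by ring.
by rewrite mulKn.
Qed.

Lemma nbr_nonM x y : x \notin M -> d = #|M| -> e x y = (y \in M).
Proof.
move=> hx hdk.
have sub : M \subset [set v | e x v].
  apply/subsetP => v hv; rewrite inE esym; apply: M_adj => //.
  apply/eqP => vx; move: hx; by rewrite vx hv.
have /eqP E : M == [set v | e x v].
  by rewrite eqEcard sub /= -[#|[set v | e x v]|]/(deg e x) hdeg // hdk.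
by rewrite E inE.
Qed.

Lemma iso_build : d = #|M| -> isomorphic e (join (@completeG #|M|) (@emptyG (n - #|M|))).
Proof.
move=> hdk.
have [u0 hu0] := exists_M.
have hw : w0 \in ~: M by rewrite in_setC.
pose f u := if u \in M then inl (enum_rank_in hu0 u) else inr (cast_ord cardCM (enum_rank_in hw u)) : 'I_#|M| + 'I_(n - #|M|).
exists f; split.
  apply: inj_card_bij.
    move=> x y; rewrite /f; case: ifP => hx; case: ifP => hy // [] h.
      by rewrite -(enum_rankK_in hu0 hx) h enum_rankK_in.
    have hx' : x \in ~: M by rewrite in_setC hx.
    have hy' : y \in ~: M by rewrite in_setC hy.
    have {}h : enum_rank_in hw x = enum_rank_in hw y by apply: val_inj.
    by rewrite -(enum_rankK_in hw hx') h enum_rankK_in.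
  rewrite card_sum !card_ord hT.
  have := cardsC M; rewrite hT => <-; lia.
move=> x y; rewrite /f /join /completeG /emptyG.
case: ifP => hx; case: ifP => hy /=.
- case: (eqVneq x y) => [->|nxy]; first by rewrite eirr eqxx.
  rewrite M_adj // 1?eq_sym //; symmetry; apply/negP => /eqP h; move/eqP: nxy; apply.
  by rewrite -(enum_rankK_in hu0 hx) -h enum_rankK_in.
- apply: M_adj => //; apply/eqP => yx; move: hy; by rewrite yx hx.
- rewrite esym; apply: M_adj => //; apply/eqP => yx; move: hx; by rewrite yx hy.
- by rewrite nbr_nonM ?hx ?hy.
Qed.

Lemma iso_d : isomorphic e (join (@completeG #|M|) (@emptyG (n - #|M|))) -> d = #|M|.
Proof.
case=> f [[g fK gK] hf].
have hk : (0 < n - #|M|)%N by rewrite -cardCM; apply/card_gt0P; exists w0; rewrite in_setC.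
pose j : 'I_(n - #|M|) := Ordinal hk.
pose w := g (inr j).
have fw : f w = inr j by rewrite /w gK.
have hdw : deg e w = #|M|.
  rewrite /deg.
  have -> : [set v | e w v] = f @^-1: [set z | if z is inl _ then true else false].
    apply/setP => v; rewrite !inE hf fw /join; by case: (f v).
  rewrite on_card_preimset; last by apply: onW_bij; exists g.
  have -> : [set z : 'I_#|M| + 'I_(n - #|M|) | if z is inl _ then true else false] = inl @: [set: 'I_#|M|].
    apply/setP => -[a|b]; rewrite !inE.
      by symmetry; apply/imsetP; exists a; rewrite ?inE.
    by symmetry; apply/imsetP => -[a _].
  by rewrite card_imset ?cardsT ?card_ord //; move=> a b [].
case hwM: (w \in M).
  move: hwM; rewrite inM hdw => /eqP hk'.
  have := k_le_d; have := d_lt; lia.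
by rewrite -(hdeg w (negbT hwM)) hdw.
Qed.

Lemma all_facts : [/\ (#|M| <= d)%N, (d < n.-1)%N, (0 < #|M|)%N,
   cM2 e = (#|M| * (n - #|M|) * (n.-1 ^ 2 - d ^ 2))%N &
   (d = #|M| <-> isomorphic e (join (@completeG #|M|) (@emptyG (n - #|M|))))].
Proof.
split; [exact: k_le_d | exact: d_lt | | exact: cM2_formula | split; [exact: iso_build | exact: iso_d]].
have [u hu] := exists_M; apply/card_gt0P; by exists u.
Qed.

End Comb.

Local Open Scope ring_scope.

Lemma H_mono (R : realDomainType) (K N Dd : R) : 0 <= K -> K <= Dd -> K <= N ->
  K * (N - K) * ((N - 1) ^+ 2 - Dd ^+ 2) <= K * (N - K) * ((N - 1) ^+ 2 - K ^+ 2).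
Proof.
move=> h0 h1 h2.
apply: ler_wpM2l; first by apply: mulr_ge0 => //; rewrite subr_ge0.
rewrite lerD2l lerN2; nra.
Qed.

Lemma cast_formula (R : numDomainType) (k n d : nat) : (k <= n)%N -> (d <= n.-1)%N -> (0 < n)%N ->
  ((k * (n - k) * (n.-1 ^ 2 - d ^ 2))%N%:R : R)
  = k%:R * (n%:R - k%:R) * ((n%:R - 1) ^+ 2 - d%:R ^+ 2).
Proof.
case: n => // m hk hd _ /=.
rewrite !natrM natrB // natrB ?leq_sqr // !natrX -[m.+1]addn1 natrD; ring.
Qed.

Theorem proposition4 (R : realType) (T : finType) (e : rel T) (n : nat) :
  symmetric e -> irreflexive e ->
  #|T| = n -> (11 <= n)%N ->
  connected e -> bidegreed e -> maxdeg e = n.-1 ->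
  let k := #|Mset e| in
  ((cM2 e)%:Z <= k%:Z * (n%:Z - k%:Z) * ((n%:Z - 1) ^+ 2 - k%:Z ^+ 2))
  /\ ((cM2 e)%:Z = k%:Z * (n%:Z - k%:Z) * ((n%:Z - 1) ^+ 2 - k%:Z ^+ 2)
      <-> isomorphic e (join (@completeG k) (@emptyG (n - k))))
  /\ (exists eps : R, 372 / 1000 <= eps <= 392 / 1000 /\
        (cM2 e)%:R <= eps * n%:R ^+ 2 * (1 - eps) * ((n%:R - 1) ^+ 2 - eps ^+ 2 * n%:R ^+ 2)).
Proof.
move=> hsym hirr hT hn hconn hbi hmax k.
have [d [hdn hdeg [w0 hw0]]] := bideg_struct _ _ _ hT hn hmax hbi.
have [hkd hdl hk0 hcm hiso] := all_facts _ _ hsym hirr _ hT hn hmax _ hdn hdeg _ hw0.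
rewrite -/k in hkd hk0 hcm hiso.
have hkn : (k <= n)%N by lia.
have hdn1 : (d <= n.-1)%N by lia.
have hn0 : (0 < n)%N by lia.
have castZ : (cM2 e)%:Z = k%:Z * (n%:Z - k%:Z) * ((n%:Z - 1) ^+ 2 - d%:Z ^+ 2).
  by rewrite hcm -[Posz (_ * _ * _)%N]natz cast_formula // !natz.
split; [|split].
- rewrite castZ; apply: H_mono; rewrite ?lez_nat //.
- split => [heq|hi].
    apply/hiso.
    have e1 : k%:Z * (n%:Z - k%:Z) != 0.
      rewrite mulf_neq0 // ?subr_eq0 ?eqz_nat; lia.
    have := mulfI e1 (etrans (esym castZ) heq).
    move/addrI/oppr_inj/eqP.
    rewrite -!natz -!natrX eqr_nat eqn_exp2r // => /eqP //.
  by rewrite castZ (hiso.2 hi).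
- have castR : ((cM2 e)%:R : R) = k%:R * (n%:R - k%:R) * ((n%:R - 1) ^+ 2 - d%:R ^+ 2).
    by rewrite hcm cast_formula.
  have hb : ((cM2 e)%:R : R) <= k%:R * (n%:R - k%:R) * ((n%:R - 1) ^+ 2 - k%:R ^+ 2).
    by rewrite castR; apply: H_mono; rewrite ?ler_nat.
  have hN : (11 : R) <= n%:R by rewrite ler_nat.
  have hK2 : (k%:R : R) <= n%:R - 2.
    have : ((k + 2)%N%:R : R) <= n%:R by rewrite ler_nat; lia.
    rewrite natrD; lra.
  have hK0 : (0 : R) <= k%:R by [].
  move: hb hN hK2 hK0; set K := (k%:R : R); set N := (n%:R : R) => hb hN hK2 hK0.
  case: (ltrP K (372/1000 * N)) => h1.
    exists (372/1000); split; first by apply/andP; split; lra.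
    apply: (le_trans hb); apply: (le_trans (L1 _ _ _ hN hK0 (ltW h1))).
    rewrite le_eqVlt; apply/orP; left; apply/eqP; ring.
  case: (ltrP (392/1000 * N) K) => h2.
    exists (392/1000); split; first by apply/andP; split; lra.
    apply: (le_trans hb); apply: (le_trans (L2 _ _ _ hN (ltW h2) hK2)).
    rewrite le_eqVlt; apply/orP; left; apply/eqP; ring.
  have hNp : 0 < N by lra.
  exists (K / N); split.
    apply/andP; split; [rewrite ler_pdivlMr // | rewrite ler_pdivrMr //]; lra.
  apply: (le_trans hb); rewrite le_eqVlt; apply/orP; left; apply/eqP.
  have hN0 : N != 0 by rewrite lt0r_neq0.
  clearbody K N; field; exact: hN0.
Qed.
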